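(* Let $\mathcal{Z}\subset\mathbb{R}^d$, let $\pi$ be a probability distribution on $\mathcal{Z}$, let $\ell:\mathcal{Z}\times\mathcal{Z}\to[0,1]$ be a normalized error function, and let $N$ be the training set size. Let $M$ be a randomized training mechanism mapping datasets in $\mathcal{Z}^N$ to weights $\theta\in\Theta$. For a reconstruction attack $\mathcal{R}:\Theta\to\mathcal{Z}$ define $$TPR_{cum}(\tau)=\mathbb{P}\Big[\min_{Z\in\mathcal{D}_N}\ell(Z,\mathcal{R}(\theta))<\tau\Big]\ \text{with}\ \mathcal{D}_N\sim\pi^{N},\ \theta\sim M(\mathcal{D}_N),$$ $$FPR_{cum}(\tau)=\mathbb{P}\Big[\min_{Z\in\mathcal{D}_N}\ell(Z,\mathcal{R}(\theta))<\tau\Big]\ \text{with}\ \mathcal{D}_N\sim\pi^{N},\ \mathcal{D}_N'\sim\pi^{N}\ \text{independent},\ \theta\sim M(\mathcal{D}_N').$$ Assume there exists $Z_0\in\mathcal{Z}$ such that $\kappa_\tau(Z_0):=\mathbb{P}_{Z\sim\pi}[\ell(Z,Z_0)\le\tau]$ satisfies $0<\kappa_\tau(Z_0)<1$ for every $\tau\in(0,1)$. Define the baseline attack $\mathcal{R}_0(\theta)=Z_0$ for all $\theta$. Then for every $\tau\in(0,1)$, for this attack, $$TPR_{cum}(\tau)\xrightarrow{N\to\infty}1,\qquad FPR_{cum}(\tau)\xrightarrow{N\to\infty}1.$$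
   Context: $\pi^N$ denotes the product distribution (training set of $N$ i.i.d. samples from $\pi$). *)

(* Defs.v *)
From HB Require Import structures.
From mathcomp Require Import all_boot all_order all_algebra.
From mathcomp Require Import all_classical all_reals all_analysis.
Set Implicit Arguments. Unset Strict Implicit. Unset Printing Implicit Defensive.
Import Order.TTheory GRing.Theory Num.Theory.
Local Open Scope classical_set_scope.
Local Open Scope ring_scope.

Definition mutually_independent (R : realType) (d : measure_display)
  (Om : measurableType d) (P : probability Om R)
  (d' : measure_display) (T : measurableType d') (I : eqType)
  (X : I -> Om -> T) : Prop :=
  forall (s : seq I), uniq s ->
  forall (A : I -> set T), (forall i, measurable (A i)) ->
  P (\bigcap_(i in [set` s]) (X i @^-1` A i)) =
    (\prod_(i <- s) P (X i @^-1` A i))%E.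

(* (X i) for i : nat and (Y i) for i : nat are jointly i.i.d. with law pi:
   X realizes D_N ~ pi^N (first N coordinates), Y realizes an independent
   D'_N ~ pi^N. *)
Definition iid_pair (R : realType) (d : measure_display)
  (Om : measurableType d) (P : probability Om R)
  (d' : measure_display) (T : measurableType d') (pi : probability T R)
  (X Y : nat -> Om -> T) : Prop :=
  (forall i, measurable_fun setT (X i)) /\
  (forall i, measurable_fun setT (Y i)) /\
  (forall i (A : set T), measurable A -> P (X i @^-1` A) = pi A) /\
  (forall i (A : set T), measurable A -> P (Y i @^-1` A) = pi A) /\
  mutually_independent P
    (fun k : nat + nat => match k with inl i => X i | inr i => Y i end).

(* TPR_cum(tau) = P[ min_{Z in D_N} l(Z, Ratt theta) < tau ],
   D_N = (X 0, ..., X (N-1)) ~ pi^N, theta ~ M N D_N.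
   "min < tau" over the finite dataset is written as "some element has
   error < tau". *)
Definition TPR_cum (R : realType) (d : measure_display)
  (Om : measurableType d) (P : probability Om R)
  (d' : measure_display) (T : measurableType d')
  (d2 : measure_display) (Theta : measurableType d2)
  (X : nat -> Om -> T)
  (M : forall N : nat, ('I_N -> T) -> probability Theta R)
  (Ratt : Theta -> T) (l : T -> T -> R) (N : nat) (tau : R) : \bar R :=
  (\int[P]_w M N (fun i : 'I_N => X i w)
      [set th | exists i : 'I_N, (l (X i w) (Ratt th) < tau)%R])%E.

Definition FPR_cum (R : realType) (d : measure_display)
  (Om : measurableType d) (P : probability Om R)
  (d' : measure_display) (T : measurableType d')
  (d2 : measure_display) (Theta : measurableType d2)
  (X Y : nat -> Om -> T)
  (M : forall N : nat, ('I_N -> T) -> probability Theta R)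
  (Ratt : Theta -> T) (l : T -> T -> R) (N : nat) (tau : R) : \bar R :=
  (\int[P]_w M N (fun i : 'I_N => Y i w)
      [set th | exists i : 'I_N, (l (X i w) (Ratt th) < tau)%R])%E.

Definition kappa (R : realType) (d' : measure_display) (T : measurableType d')
  (pi : probability T R) (l : T -> T -> R) (tau : R) (Z0 : T) : \bar R :=
  pi [set z | l z Z0 <= tau].

(* Main.v *)
Require Import Defs.
From HB Require Import structures.
From mathcomp Require Import all_boot all_order all_algebra.
From mathcomp Require Import all_classical all_reals all_analysis.
From mathcomp Require Import lra.
Import Order.TTheory GRing.Theory Num.Theory.
Local Open Scope classical_set_scope.
Local Open Scope ring_scope.

Theorem lemma1 (R : realType)
  (d : measure_display) (Om : measurableType d) (P : probability Om R)
  (d' : measure_display) (T : measurableType d') (pi : probability T R)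
  (d2 : measure_display) (Theta : measurableType d2)
  (l : T -> T -> R)
  (hl01 : forall z z' : T, 0 <= l z z' <= 1)
  (hlmeas : forall z0 : T, measurable_fun setT (fun z => l z z0))
  (M : forall N : nat, ('I_N -> T) -> probability Theta R)
  (X Y : nat -> Om -> T) (hiid : iid_pair P pi X Y)
  (Z0 : T)
  (hZ0 : forall tau : R, 0 < tau < 1 ->
          (0 < kappa pi l tau Z0)%E /\ (kappa pi l tau Z0 < 1)%E) :
  forall tau : R, 0 < tau < 1 ->
    ((fun N => TPR_cum P X M (fun _ : Theta => Z0) l N tau) @ \oo --> 1%E) /\
    ((fun N => FPR_cum P X Y M (fun _ : Theta => Z0) l N tau) @ \oo --> 1%E).
Proof.
move=> tau /andP[tau0 tau1].
case: hiid => hX [hY [hXd [hYd hind]]].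
set f := fun z => l z Z0.
set A := [set z | tau <= l z Z0].
have mA : measurable A.
  have := hlmeas Z0 measurableT _ (measurable_itv `[tau, +oo[%R).
  rewrite setTI; congr measurable; apply/seteqP; split => z /=;
    by rewrite in_itv /= andbT.
have mXA : forall i, measurable (X i @^-1` A).
  by move=> i; have := hX i measurableT _ mA; rewrite setTI.
set Ec := fun N : nat => \bigcap_(i in [set i | (i < N)%N]) (X i @^-1` A).
have mEc : forall N, measurable (Ec N).
  by move=> N; apply: bigcap_measurableType => k _; exact: mXA.
set E := fun N : nat => [set w | exists i : 'I_N, l (X i w) Z0 < tau].
have EE : forall N, E N = ~` Ec N.
  move=> N; apply/seteqP; split => w /=.
  - move=> [i hi] hall; have := hall i (ltn_ord i); rewrite /A /=.
    by rewrite leNgt hi.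
  - move=> /existsNP[i /not_implyP[hi hn]]; exists (Ordinal hi) => /=.
    by rewrite ltNge; apply/negP.
have mE : forall N, measurable (E N) by move=> N; rewrite EE; exact: measurableC.
set q := fine (pi A).
have piAE : pi A = q%:E.
  rewrite /q fineK // ge0_fin_numE ?measure_ge0 //.
  by apply: (le_lt_trans (probability_le1 pi mA)); rewrite ltry.
have q0 : 0 <= q by rewrite -lee_fin -piAE measure_ge0.
have q1 : q < 1.
  have t2 : (0 < tau / 2 < 1).
    apply/andP; split; lra.
  have [k0 _] := hZ0 (tau / 2) t2.
  have : (kappa pi l (tau / 2) Z0 <= pi (~` A))%E.
    apply: le_measure; [rewrite inE | rewrite inE; exact: measurableC mA |].
      rewrite /kappa; have := hlmeas Z0 measurableT _ (measurable_itv `]-oo, tau/2]%R).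
      rewrite setTI; congr measurable; apply/seteqP; split => z /=;
        by rewrite in_itv /=.
    move=> z /= hz; rewrite /A /= => hle.
    have : tau <= tau / 2 by apply: le_trans hz.
    lra.
  rewrite probability_setC // piAE => /(lt_le_trans k0).
  by rewrite -EFinD lte_fin subr_gt0.
have PEc : forall N, P (Ec N) = (q ^+ N)%:E.
  move=> N.
  have := hind (map inl (iota 0 N)) _ (fun _ => A) (fun _ => mA).
  rewrite map_inj_uniq ?iota_uniq; last by move=> a b [].
  move=> /(_ isT) H.
  have -> : Ec N = \bigcap_(i in [set` map inl (iota 0 N)])
      ((match i with inl i => X i | inr i => Y i end) @^-1` A).
    apply/seteqP; split => w /=.
    - move=> hall [i|i] /= hin.
        move: hin; rewrite mem_map ?mem_iota //=; last by move=> a b [].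
        by rewrite add0n => hi; apply: hall.
      by move: hin => /mapP[].
    - move=> hall i /= hi; apply: (hall (inl i)) => /=.
      by rewrite mem_map ?mem_iota //=; move=> a b [].
  rewrite H big_map.
  under eq_bigr => i _ do rewrite hXd // piAE.
  rewrite prodEFin; congr EFin.
  have := prodr_const_nat 0 N q; rewrite subn0 /index_iota subn0 => <-.
  by [].
have Hint : forall N (D : Om -> 'I_N -> T),
    (\int[P]_w M N (D w) [set th | exists i : 'I_N, (l (X i w) Z0 < tau)%R])%E
    = (1 - q ^+ N)%:E.
  move=> N D.
  transitivity (\int[P]_w (\1_(E N) w)%:E)%E.
    apply: eq_integral => w _.
    rewrite indicE; case: (pselect (E N w)) => hw.
    - rewrite mem_set //.
      have -> : [set th : Theta | exists i : 'I_N, (l (X i w) Z0 < tau)%R] = setT.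
        by apply/seteqP; split => // th _.
      by rewrite probability_setT.
    - rewrite memNset //.
      have -> : [set th : Theta | exists i : 'I_N, (l (X i w) Z0 < tau)%R] = set0.
        by apply/seteqP; split => // th.
      by rewrite measure0.
  rewrite integral_indic // setIT EE.
  apply: eq_trans; first exact: (probability_setC P (mEc N)).
  rewrite PEc.
  by rewrite -EFinB.
have Hc : (fun N => (1 - q ^+ N)%:E) @ \oo --> 1%E.
  apply: cvg_EFin; first by near=> n.
  rewrite -[X in _ --> X]subr0; apply: cvgB; first exact: cvg_cst.
  by apply: cvg_expr; rewrite ger0_norm.
split.
- by apply: cvg_trans Hc; apply: near_eq_cvg; near=> N; rewrite /TPR_cum Hint.
- by apply: cvg_trans Hc; apply: near_eq_cvg; near=> N; rewrite /FPR_cum Hint.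
Unshelve. all: by end_near.
Qed.
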